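(* Let $G$ be a finite simple graph and $m$ a positive integer. The generalized Mycielskian ${\sf M}_m(G)$ is a cover graph if and only if $G$ is bipartite.
   Context: A graph is a cover graph if it is the underlying (undirected) graph of the Hasse diagram of some finite partially ordered set. For a graph $G$ with vertex set $V_0=\{\langle 0,j\rangle : 0\le j\le n-1\}$ and edge set $E_0$, and $m>0$, the generalized Mycielskian ${\sf M}_m(G)$ has vertex set $V_0\cup V_1\cup\cdots\cup V_m\cup\{u\}$ where $V_i=\{\langle i,j\rangle: 0\le j\le n-1\}$, and edge set $E_0\cup E_1\cup\cdots\cup E_m\cup\{\langle m,j\rangle u: 0\le j\le n-1\}$, where $E_i=\{\langle i-1,j\rangle\langle i,k\rangle : \langle 0,j\rangle\langle 0,k\rangle\in E_0\}$ for $1\le i\le m$. *)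

(* Defs.v *)
From mathcomp Require Import all_boot.
Set Implicit Arguments. Unset Strict Implicit. Unset Printing Implicit Defensive.

Definition simple_graph (T : finType) (e : rel T) :=
  symmetric e /\ irreflexive e.

Definition bipartite (T : finType) (e : rel T) :=
  exists c : T -> bool, forall x y, e x y -> c x != c y.

Definition covers (T : finType) (lt : rel T) (x y : T) :=
  lt x y && [forall z, ~~ (lt x z && lt z y)].

Definition cover_graph (T : finType) (e : rel T) :=
  exists lt : rel T, irreflexive lt /\ transitive lt /\
    forall x y, e x y = covers lt x y || covers lt y x.

(* Generalized Mycielskian M_m(G) of G on vertices <0,j>, j < n.
   Vertex <i,j> (0 <= i <= m, j < n) is Some (i, j); the apex u is None. *)
Definition myc_vertex (n m : nat) := option ('I_m.+1 * 'I_n)%type.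

Definition myc_edge {n : nat} (m : nat) (G : rel 'I_n) : rel (myc_vertex n m) :=
  fun x y =>
    match x, y with
    | Some (i, j), Some (i', k) =>
        [|| [&& (i == 0 :> nat), (i' == 0 :> nat) & G j k],
            (i' == i.+1 :> nat) && G j k
          | (i == i'.+1 :> nat) && G j k]
    | Some (i, _), None => (i == m :> nat)
    | None, Some (i, _) => (i == m :> nat)
    | None, None => false
    end.
Arguments myc_edge {n} m G.

(* Main.v *)
Require Import Defs.
From mathcomp Require Import all_boot zify.
From Stdlib Require Import ClassicalEpsilon.
Set Implicit Arguments. Unset Strict Implicit. Unset Printing Implicit Defensive.

Lemma cov_edge_lt (T : finType) (e lt : rel T) :
  irreflexive lt -> transitive lt ->
  (forall x y, e x y = covers lt x y || covers lt y x) ->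
  forall x y, e x y -> lt x y + lt y x = 1.
Proof.
move=> irr tr hc x y; rewrite hc /covers.
case/orP=> /andP[h _]; rewrite h.
- case h2: (lt y x) => //. by have := tr _ _ _ h h2; rewrite irr.
- case h2: (lt x y) => //. by have := tr _ _ _ h h2; rewrite irr.
Qed.

Lemma cov_nobyp (T : finType) (e lt : rel T) :
  irreflexive lt -> transitive lt ->
  (forall x y, e x y = covers lt x y || covers lt y x) ->
  forall a b d, e a d -> lt a b -> lt b d -> False.
Proof.
move=> irr tr hc a b d; rewrite hc /covers => H hab hbd.
case/orP: H => [/andP[_ /forallP /(_ b)]|/andP[hda _]].
- by rewrite hab hbd.
- have had := tr _ _ _ hab hbd. by have := tr _ _ _ had hda; rewrite irr.
Qed.

Lemma cov_sq (T : finType) (e lt : rel T) :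
  irreflexive lt -> transitive lt ->
  (forall x y, e x y = covers lt x y || covers lt y x) ->
  forall x0 x1 x2 x3, e x0 x1 -> e x1 x2 -> e x0 x3 -> e x3 x2 ->
  lt x0 x1 + lt x1 x2 = lt x0 x3 + lt x3 x2.
Proof.
move=> irr tr hc x0 x1 x2 x3 e01 e12 e03 e32.
have esym : forall x y, e x y -> e y x by move=> x y; rewrite !hc orbC.
have B := cov_nobyp irr tr hc.
have c01 := cov_edge_lt irr tr hc e01.
have c12 := cov_edge_lt irr tr hc e12.
have c03 := cov_edge_lt irr tr hc e03.
have c32 := cov_edge_lt irr tr hc e32.
have e10 := esym _ _ e01. have e21 := esym _ _ e12.
have e30 := esym _ _ e03. have e23 := esym _ _ e32.
have T3 : forall a b c d, lt a b -> lt b c -> lt c d -> lt a d.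
  move=> a b c d h1 h2 h3; exact: (tr _ _ _ (tr _ _ _ h1 h2) h3).
have C4 : forall a b c d, lt a b -> lt b c -> lt c d -> lt d a -> False.
  move=> a b c d h1 h2 h3 h4; have := tr _ _ _ (T3 _ _ _ _ h1 h2 h3) h4; by rewrite irr.
have B3 : forall a b c d, e a d -> lt a b -> lt b c -> lt c d -> False.
  by move=> a b c d h h1 h2 h3; apply: (B a b d h h1); apply: tr h3.
move: c01 c12 c03 c32.
case h01: (lt x0 x1); case h10: (lt x1 x0) => // _;
case h12: (lt x1 x2); case h21: (lt x2 x1) => // _;
case h03: (lt x0 x3); case h30: (lt x3 x0) => // _;
case h32: (lt x3 x2); case h23: (lt x2 x3) => // _;
 try (exfalso; solve [eauto]).
Qed.


Definition vv n m (i : nat) (j : 'I_n) : myc_vertex n m :=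
  if i <= m then Some (inord i, j) else None.

Lemma myc_sym n m (G : rel 'I_n) : symmetric G -> symmetric (myc_edge m G).
Proof.
move=> sG [[i j]|] [[i' k]|] //=. rewrite (sG j k).
by case: (i == 0 :> nat); case: (i' == 0 :> nat); case: (i' == i.+1 :> nat);
   case: (i == i'.+1 :> nat); rewrite /= ?andbF ?orbF.
Qed.

Lemma e_up n m (G : rel 'I_n) i j k : i <= m -> G j k ->
  myc_edge m G (vv m i j) (vv m i.+1 k).
Proof.
move=> im gjk; rewrite /vv im.
case: (leqP i.+1 m) => h.
- by rewrite /= !inordK ?ltnS // ?(ltnW h) eqxx gjk /= orbT.
- have -> : i = m by apply/eqP; rewrite eqn_leq im -ltnS.
  by rewrite /= inordK.
Qed.

Lemma e_down n m (G : rel 'I_n) i j k : symmetric G -> i <= m -> G j k ->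
  myc_edge m G (vv m i.+1 j) (vv m i k).
Proof. by move=> sG im gjk; rewrite myc_sym //; apply: e_up; rewrite // sG. Qed.

Lemma e_0 n m (G : rel 'I_n) j k : G j k -> myc_edge m G (vv m 0 j) (vv m 0 k).
Proof. by move=> gjk; rewrite /vv /= inordK //= gjk. Qed.

Lemma shift_sum (F : nat -> nat) L : (forall s, F (s + L) = F s) ->
  \sum_(0 <= s < L) F s.+1 = \sum_(0 <= s < L) F s.
Proof.
case: L => [|L] hF; first by rewrite !big_geq.
by rewrite big_nat_recr // big_nat_recl //= -(hF 0) add0n addnC.
Qed.


Lemma no_odd_walk n m (G : rel 'I_n) (lt : rel (myc_vertex n m)) :
  symmetric G -> irreflexive lt -> transitive lt ->
  (forall x y, myc_edge m G x y = covers lt x y || covers lt y x) ->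
  forall (w : nat -> 'I_n) L, (forall s, G (w s) (w s.+1)) ->
  (forall s, w (s + L) = w s) -> ~~ odd L.
Proof.
move=> sG irr tr hc w L hw per.
have sq := cov_sq irr tr hc.
pose V := @vv n m.
pose A i s := (lt (V i (w s)) (V i.+1 (w s.+1)) : nat).
pose B i s := (lt (V i.+1 (w s)) (V i (w s.+1)) : nat).
pose S i := \sum_(0 <= s < L) (A i s + B i s).
pose x s := (lt (V 0 (w s)) (V 0 (w s.+1)) : nat).
have perA i s : A i (s + L) = A i s by rewrite /A -addSn !per.
have perB i s : B i (s + L) = B i s by rewrite /B -addSn !per.
have perx s : x (s + L) = x s by rewrite /x -addSn !per.
have hQ s : x s + x s.+1 = A 0 s + B 0 s.+1.
  apply: sq; [exact: e_0|exact: e_0|exact: e_up|exact: e_down].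
have hT k s : k < m -> B k s + A k s.+1 = A k.+1 s + B k.+1 s.+1.
  move=> km; apply: sq; [apply: e_down|apply: e_up|apply: e_up|apply: e_down] => //; exact: ltnW.
have Vtop j : V m.+1 j = None by rewrite /V /vv ltnn.
pose g s := (lt (V m (w s)) None : nat).
have perg s : g (s + L) = g s by rewrite /g per.
have hTop s : A m s + B m s + g s.+1 = g s + 1.
  rewrite /A /B /g !Vtop -addnA.
  have := cov_edge_lt irr tr hc (e_up (leqnn m) (hw s.+1)).
  by rewrite -/V Vtop addnC => ->.
have hX : \sum_(0<=s<L) x s + \sum_(0<=s<L) x s = S 0.
  rewrite -{2}(shift_sum perx) -big_split /= (eq_bigr _ (fun s _ => hQ s)).
  by rewrite big_split /= (shift_sum (perB 0)) /S big_split.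
have hS k : k < m -> S k = S k.+1.
  move=> km; rewrite /S !big_split /= -(shift_sum (perA k)) addnC -big_split /=.
  rewrite (eq_bigr _ (fun s _ => hT k s km)) big_split /=.
  by rewrite (shift_sum (perB k.+1)).
have hS0 : forall k, k <= m -> S 0 = S k.
  elim=> [//|k IH] km; rewrite IH ?(ltnW km) //; exact: hS.
have hSm : S m = L.
  have H : \sum_(0<=s<L) (A m s + B m s + g s.+1) = \sum_(0<=s<L) (g s + 1).
    by apply: eq_bigr => s _; exact: hTop.
  move: H; rewrite [LHS]big_split [RHS]big_split /= (shift_sum perg).
  by rewrite sum_nat_const_nat subn0 muln1 addnC => /addnI.
by rewrite -hSm -(hS0 m (leqnn m)) -hX addnn odd_double.
Qed.


Definition walk n (G : rel 'I_n) (f : nat -> 'I_n) l a b :=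
  f 0 = a /\ f l = b /\ forall s, s < l -> G (f s) (f s.+1).

Lemma walk_rev n (G : rel 'I_n) f l a b : symmetric G -> walk G f l a b ->
  walk G (fun s => f (l - s)) l b a.
Proof.
move=> sG [h0 [hl hs]]; split; first by rewrite subn0.
split; first by rewrite subnn.
move=> s sl; rewrite -(subnSK sl) sG; apply: hs; lia.
Qed.

Lemma walk_cat n (G : rel 'I_n) f g l1 l2 a b c : walk G f l1 a b -> walk G g l2 b c ->
  walk G (fun s => if s <= l1 then f s else g (s - l1)) (l1 + l2) a c.
Proof.
move=> [f0 [fl fs]] [g0 [gl gs]]; split; first by rewrite leq0n.
split.
  case: ifP => h.
    have l20 : l2 = 0 by lia.
    by subst l2; rewrite addn0 fl -g0 gl.
  by rewrite addKn.
move=> s sl; case: (ltngtP s.+1 l1) => h.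
- have h1 : s <= l1 by lia.
  have h2 : s.+1 <= l1 by lia.
  rewrite h1; apply: fs; lia.
- case: (eqVneq s l1) => [->|ne].
    rewrite leqnn subSnn fl -g0; apply: (gs 0); lia.
  have h2 : (s <= l1) = false by lia.
  rewrite h2 subSn; [apply: gs; lia|lia].
- have h1 : s <= l1 by lia.
  rewrite h1; apply: fs; lia.
Qed.


Lemma walk_edge n (G : rel 'I_n) j k : G j k ->
  walk G (fun s => if s == 0 then j else k) 1 j k.
Proof. by move=> gjk; split=> //; split=> // s; case: s. Qed.

Lemma conn_walk n (G : rel 'I_n) a b : connect G a b -> exists l f, walk G f l a b.
Proof.
case/connectP=> p pp ->; exists (size p), (fun s => nth a (a :: p) s).
split=> //; split; first by rewrite (last_nth a).
move=> s sl; move/pathP: pp => /(_ a s sl) //.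
Qed.

Lemma closed_periodic n (G : rel 'I_n) f l r : walk G f l r r -> 0 < l ->
  (forall s, G (f (s %% l)) (f (s.+1 %% l))) /\
  (forall s, f ((s + l) %% l) = f (s %% l)).
Proof.
move=> [f0 [fl fs]] l0; split; last by move=> s; rewrite modnDr.
move=> s; have hk : s %% l < l by rewrite ltn_pmod.
rewrite -addn1 -modnDml; set k := s %% l in hk *.
case: (ltngtP (s %% l + 1) l) => h.
- rewrite (modn_small h) addn1; exact: fs.
- lia.
- have hl : k.+1 = l by lia.
  rewrite h modnn f0 -fl -hl; exact: fs.
Qed.

Lemma bip_of_noodd n (G : rel 'I_n) : symmetric G ->
  (forall f l r, walk G f l r r -> ~~ odd l) -> bipartite G.
Proof.
move=> sG hno.
have cs : connect_sym G := sym_connect_sym sG.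
pose P j := exists l f, walk G f l (root G j) j /\ ~~ odd l.
exists (fun j => if excluded_middle_informative (P j) then true else false).
move=> j k gjk.
have rk : root G k = root G j by apply/esym/(rootP cs); exact: connect1.
have wr : forall x, exists l f, walk G f l (root G x) x.
  move=> x; apply: conn_walk; rewrite cs; exact: connect_root.
have key : forall lj fj lk fk, walk G fj lj (root G j) j ->
    walk G fk lk (root G j) k -> odd lj = odd lk -> False.
  move=> lj fj lk fk wj wk hp.
  have w1 := walk_cat (walk_cat wj (walk_edge gjk)) (walk_rev sG wk).
  have := hno _ _ _ w1; rewrite !oddD hp /=; by case: (odd lk).
case: excluded_middle_informative => [[lj [fj [wj ej]]]|nj];
case: excluded_middle_informative => [[lk [fk [wk ek]]]|nk] //.
- have wk' : walk G fk lk (root G j) k by rewrite -rk.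
  exfalso; apply: (key _ _ _ _ wj wk').
  by rewrite (negbTE ej) (negbTE ek).
- exfalso; have [lj [fj wj]] := wr j; have [lk [fk wk]] := wr k.
  have wk' : walk G fk lk (root G j) k by rewrite -rk.
  apply: (key _ _ _ _ wj wk').
  have oj : odd lj.
    apply/negP => h; apply: nj; exists lj, fj; split=> //; exact/negP.
  have ok : odd lk.
    apply/negP => h; apply: nk; exists lk, fk; split=> //; exact/negP.
  by rewrite oj ok.
Qed.


Lemma cover_of_bip n m (G : rel 'I_n) (c : 'I_n -> bool) : symmetric G -> 0 < m ->
  (forall x y, G x y -> c x != c y) -> cover_graph (myc_edge m G).
Proof.
move=> sG m0 hc.
pose r (x : myc_vertex n m) : nat := if x is Some (_, j) then c j : nat else 2.
pose e := myc_edge m G.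
have es : symmetric e := myc_sym (m:=m) sG.
pose lt x y := (r x < r y) && (e x y || [exists z, [&& e x z, e z y & r x < r z < r y]]).
have rb : forall x, r x <= 2 by move=> [[i j]|] //=; case: (c j).
have e_ne : forall x y, e x y -> r x != r y.
  move=> [[i j]|] [[i' k]|] //=.
  - move=> H; have gjk : G j k.
      by move: H; case: (G j k) => //; rewrite !andbF.
    by have := hc _ _ gjk; case: (c j); case: (c k).
  - by case: (c j).
  - by case: (c k).
have lt_edge : forall x y, lt x y -> r y <= (r x).+1 -> e x y.
  move=> x y /andP[_ /orP[//|/existsP[z /and3P[_ _ /andP[h1 h2]]]]] h; lia.
have top : forall x z, e x z -> e z None -> e x None -> False.
  move=> [[i j]|] [[i' k]|] //=; rewrite /e /= => + /eqP h1 /eqP h2.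
  rewrite h1 h2 => /or3P[/and3P[/eqP H _ _]|/andP[/eqP H _]|/andP[/eqP H _]]; lia.
have cdir : forall x y, r x < r y -> e x y -> covers lt x y.
  move=> x y rxy exy; rewrite /covers; apply/andP; split; first by rewrite /lt rxy exy.
  apply/forallP => z; apply/negP => /andP[hxz hzy].
  have [rxz rzy] : r x < r z /\ r z < r y by case/andP: hxz; case/andP: hzy.
  have ry := rb y.
  have exz : e x z by apply: (lt_edge x z hxz); lia.
  have ezy : e z y by apply: (lt_edge z y hzy); lia.
  move: ezy exy; case: y ry rzy rxy hzy => [[i j]|] //= ry; first by case: (c j); lia.
  by move=> _ _ _ h1 h2; apply: (top x z).
exists lt; split; first by move=> x; rewrite /lt ltnn.
split.
  move=> y x z /andP[rxy hxy] /andP[ryz hyz].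
  have exy : e x y by apply: lt_edge; [rewrite /lt rxy hxy | have := rb z; lia].
  have eyz : e y z by apply: lt_edge; [rewrite /lt ryz hyz | have := rb z; lia].
  rewrite /lt (ltn_trans rxy ryz) /=; apply/orP; right; apply/existsP; exists y.
  by rewrite exy eyz rxy ryz.
move=> x y; apply/idP/idP.
  move=> exy; have := e_ne _ _ exy; rewrite neq_ltn => /orP[h|h].
    by apply/orP; left; exact: cdir.
  by apply/orP; right; apply: cdir => //; rewrite es.
have H : forall x y, covers lt x y -> e x y.
  move=> a b /andP[/andP[rab /orP[//|/existsP[z /and3P[h1 h2 /andP[h3 h4]]]]] /forallP /(_ z)].
  by rewrite /lt h1 h2 h3 h4.
by case/orP=> /H //; rewrite es.
Qed.


Theorem theorem8 (n m : nat) (G : rel 'I_n) :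
  simple_graph G -> 0 < m ->
  (cover_graph (myc_edge m G) <-> bipartite G).
Proof.
move=> [sG irrG] m0; split.
- move=> [lt [irr [tr hc]]]; apply: bip_of_noodd => // f l r wf.
  apply/negP => ol.
  have l0 : 0 < l by case: l ol wf.
  have [h1 h2] := closed_periodic wf l0.
  have := @no_odd_walk _ _ _ _ sG irr tr hc (fun s => f (s %% l)) l h1 h2.
  by rewrite ol.
- move=> [c hc]; exact: cover_of_bip sG m0 hc.
Qed.
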